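(* Let $U_0=\mathrm{Spec}\,A_0$ be a reduced noetherian affine scheme and $Z\subset U_0$ a closed subset defined by an ideal $I_0\subset A_0$, such that $Z$ contains no generic point of $U_0$ and meets every irreducible component of $U_0$. Let $A$ be the $I_0$-adic completion of $A_0$, so that $A_0\to A$ is injective and flat and induces an injection $K(A_0)\to K(A)$ of total rings of fractions. Then $A_0=A\cap H^0(U_0\setminus Z,\mathcal O_{U_0})$, the intersection taken inside $K(A)$ (with $H^0(U_0\setminus Z,\mathcal O_{U_0})$ viewed inside $K(A_0)\subset K(A)$).
   Context: For a ring $B$, $K(B)=S^{-1}B$ with $S$ the set of non-zero-divisors of $B$ (total ring of fractions). *)

(* Defs.v *)
From HB Require Import structures.
From mathcomp Require Import all_boot all_order all_algebra.
Set Implicit Arguments. Unset Strict Implicit. Unset Printing Implicit Defensive.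
Import GRing.Theory.
Local Open Scope ring_scope.

Section CommAlg.
Variable R : comNzRingType.

Definition is_ideal (I : R -> Prop) : Prop :=
  [/\ I 0, (forall x y, I x -> I y -> I (x + y)) & (forall r x, I x -> I (r * x))].

Definition subideal (I J : R -> Prop) : Prop := forall x, I x -> J x.

Definition is_prime (P : R -> Prop) : Prop :=
  [/\ is_ideal P, ~ P 1 & (forall x y, P (x * y) -> P x \/ P y)].

(* generic points of Spec R = minimal primes *)
Definition is_minimal_prime (P : R -> Prop) : Prop :=
  is_prime P /\ (forall Q, is_prime Q -> subideal Q P -> subideal P Q).

Definition noetherian : Prop :=
  forall J : R -> Prop, is_ideal J ->
  exists s : seq R, forall x,
    J x <-> exists r : 'I_(size s) -> R, x = \sum_(i < size s) r i * s`_i.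

Definition reduced : Prop := forall (x : R) (n : nat), x ^+ n = 0 -> x = 0.

Definition nzd (s : R) : Prop := forall x, s * x = 0 -> x = 0.

Inductive ipow (I : R -> Prop) : nat -> R -> Prop :=
| ipow0 x : ipow I 0 x
| ipowS n i j : I i -> ipow I n j -> ipow I n.+1 (i * j)
| ipowD n x y : ipow I n.+1 x -> ipow I n.+1 y -> ipow I n.+1 (x + y).

(* ---- The I-adic completion  A = lim_n R / I^n ----
   An element of A is represented by a sequence a : nat -> R with
   a (n+1) = a n mod I^n (a compatible system of residues a n mod I^n);
   two representatives are equal in A iff they agree mod I^n for all n. *)
Definition Aelt (I : R -> Prop) (a : nat -> R) : Prop :=
  forall n, ipow I n (a n.+1 - a n).
Definition Aeq (I : R -> Prop) (a b : nat -> R) : Prop :=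
  forall n, ipow I n (a n - b n).
Definition Aconst (c : R) : nat -> R := fun _ => c.
Definition Aadd (a b : nat -> R) : nat -> R := fun n => a n + b n.
Definition Aopp (a : nat -> R) : nat -> R := fun n => - a n.
Definition Amul (a b : nat -> R) : nat -> R := fun n => a n * b n.

Definition Anzd (I : R -> Prop) (u : nat -> R) : Prop :=
  Aelt I u /\ forall v, Aelt I v -> Aeq I (Amul u v) (Aconst 0) -> Aeq I v (Aconst 0).

(* ---- total ring of fractions K(A): pairs (a, u), u a non-zero-divisor of A;
   (a,u) = (a',u') iff w (a u' - a' u) = 0 for some non-zero-divisor w ---- *)
Definition KAeq (I : R -> Prop) (x y : (nat -> R) * (nat -> R)) : Prop :=
  exists w, Anzd I w /\
    Aeq I (Amul w (Aadd (Amul x.1 y.2) (Aopp (Amul y.1 x.2)))) (Aconst 0).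

Definition KA_of_KR (b s : R) : (nat -> R) * (nat -> R) := (Aconst b, Aconst s).

Definition KReq (x y : R * R) : Prop :=
  exists v, nzd v /\ v * (x.1 * y.2 - y.1 * x.2) = 0.

(* H^0(Spec R \ V(I), O) viewed inside K(R): the fraction b/s is a section over
   U = Spec R \ V(I) iff it is regular at every point of U, i.e. for every prime
   p not containing I there are g not in p and c in R with g * (b/s) = c/1. *)
Definition H0_sections (I : R -> Prop) (b s : R) : Prop :=
  nzd s /\
  forall p, is_prime p -> ~ subideal I p ->
    exists g c, ~ p g /\ KReq (g * b, s) (c, 1).

End CommAlg.

(* Main.v *)
Require Import Defs.
From HB Require Import structures.
From mathcomp Require Import all_boot all_order all_algebra.
From mathcomp Require Import ring.
From Stdlib Require Import Classical ClassicalEpsilon.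
Set Implicit Arguments. Unset Strict Implicit. Unset Printing Implicit Defensive.
Import GRing.Theory.
Local Open Scope ring_scope.

Section Basics.
Variable R : comNzRingType.
Implicit Types (I J L N : R -> Prop) (x y r : R).

Lemma ideal0 I : is_ideal I -> I 0. Proof. by case. Qed.
Lemma idealD I x y : is_ideal I -> I x -> I y -> I (x + y). Proof. by case=> _ H _; apply: H. Qed.
Lemma idealMl I r x : is_ideal I -> I x -> I (r * x). Proof. by case=> _ _ H; apply: H. Qed.
Lemma idealMr I r x : is_ideal I -> I x -> I (x * r). Proof. by move=> HI Hx; rewrite mulrC; apply: idealMl. Qed.
Lemma idealN I x : is_ideal I -> I x -> I (- x).
Proof. by move=> HI Hx; rewrite -mulN1r; apply: idealMl. Qed.
Lemma idealB I x y : is_ideal I -> I x -> I y -> I (x - y).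
Proof. by move=> HI Hx Hy; apply: idealD => //; apply: idealN. Qed.

Lemma ipow_0 I n : is_ideal I -> ipow I n 0.
Proof.
move=> HI; case: n => [|n]; first exact: ipow0.
elim: n => [|n IH]; first by rewrite -(mulr0 (0:R)); apply: ipowS => //; [exact: ideal0|exact: ipow0].
by rewrite -(mulr0 (0:R)); apply: ipowS => //; exact: ideal0.
Qed.

Lemma ipow_D I n x y : ipow I n x -> ipow I n y -> ipow I n (x + y).
Proof. by case: n => [|n] Hx Hy; [exact: ipow0 | exact: ipowD]. Qed.

Lemma ipow_M I n r x : is_ideal I -> ipow I n x -> ipow I n (r * x).
Proof.
move=> HI; elim=> {n x} [x|n i j Hi Hj _|n x y _ IHx _ IHy].
- exact: ipow0.
- by rewrite mulrA; apply: ipowS => //; apply: idealMl.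
- by rewrite mulrDr; apply: ipowD.
Qed.

Lemma ipow_N I n x : is_ideal I -> ipow I n x -> ipow I n (- x).
Proof. by move=> HI Hx; rewrite -mulN1r; apply: ipow_M. Qed.

Lemma ipow_B I n x y : is_ideal I -> ipow I n x -> ipow I n y -> ipow I n (x - y).
Proof. by move=> HI Hx Hy; apply: ipow_D => //; apply: ipow_N. Qed.

Lemma ipow_ideal I n : is_ideal I -> is_ideal (ipow I n).
Proof. move=> HI; split; [exact: ipow_0 | move=> *; exact: ipow_D | move=> *; exact: ipow_M]. Qed.

Lemma ipow_S_aux I m x : is_ideal I -> ipow I m x -> forall n, m = n.+1 -> ipow I n x.
Proof.
move=> HI; elim=> {m x} [x|m i j Hi Hj _|m x y _ IHx _ IHy] n // [E]; subst m.
- by apply: ipow_M.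
- by apply: ipow_D; [apply: IHx | apply: IHy].
Qed.

Lemma ipow_S I n x : is_ideal I -> ipow I n.+1 x -> ipow I n x.
Proof. by move=> HI H; apply: (ipow_S_aux HI H). Qed.

Lemma ipow_le I m n x : is_ideal I -> (m <= n)%N -> ipow I n x -> ipow I m x.
Proof.
move=> HI /subnK <-; elim: (n - m)%N => [//|k IH] H.
by apply: IH; apply: ipow_S; rewrite // addSn.
Qed.

Lemma ipow_mono I J n x : (forall y, I y -> J y) -> ipow I n x -> ipow J n x.
Proof.
move=> HIJ; elim=> {n x} [x|n i j Hi _ IH|n x y _ IHx _ IHy].
- exact: ipow0.
- by apply: ipowS => //; apply: HIJ.
- exact: ipowD.
Qed.

Lemma ipow_1_aux I m x : is_ideal I -> ipow I m x -> m = 1%N -> I x.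
Proof.
move=> HI; elim=> {m x} [x|m i j Hi Hj _|m x y _ IHx _ IHy] // [E].
- by apply: idealMr.
- by subst m; apply: idealD => //; [apply: IHx|apply: IHy].
Qed.

Lemma ipow_1 I x : is_ideal I -> ipow I 1 x -> I x.
Proof. by move=> HI H; apply: (ipow_1_aux HI H). Qed.

Lemma ipow_exp I n t : is_ideal I -> I t -> ipow I n (t ^+ n).
Proof.
move=> HI Ht; elim: n => [|n IH]; first exact: ipow0.
by rewrite exprS; apply: ipowS.
Qed.

Fixpoint genl (s : seq R) (x : R) : Prop :=
  match s with
  | [::] => x = 0
  | t :: s' => exists r y, genl s' y /\ x = t * r + y
  end.

Lemma genl_ideal s : is_ideal (genl s).
Proof.
elim: s => [|t s [H0 HD HM]] /=.
  by split => //; [move=> x y -> ->; rewrite addr0 | move=> r x ->; rewrite mulr0].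
split.
- by exists 0, 0; rewrite mulr0 addr0.
- move=> x y [r1 [y1 [H1 ->]]] [r2 [y2 [H2 ->]]].
  exists (r1 + r2), (y1 + y2); split; first exact: HD.
  by rewrite mulrDr; ring.
- move=> r x [r1 [y1 [H1 ->]]]; exists (r * r1), (r * y1); split; first exact: HM.
  by ring.
Qed.

Lemma genl_mem s t : t \in s -> genl s t.
Proof.
elim: s => [//|t' s IH] /=; rewrite inE => /orP [/eqP ->|H].
  by exists 1, 0; split; [exact: ideal0 (genl_ideal s) | rewrite mulr1 addr0].
by exists 0, t; split; [exact: IH | rewrite mulr0 add0r].
Qed.

Lemma genl_sub s J : is_ideal J -> (forall t, t \in s -> J t) -> forall x, genl s x -> J x.
Proof.
move=> HJ; elim: s => [|t s IH] Hs x /=; first by move=> ->; exact: ideal0.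
move=> [r [y [Hy ->]]]; apply: idealD => //.
  by apply: idealMr => //; apply: Hs; rewrite inE eqxx.
by apply: IH => // t' Ht'; apply: Hs; rewrite inE Ht' orbT.
Qed.

Lemma genl_sum s x :
  (exists r : 'I_(size s) -> R, x = \sum_(i < size s) r i * s`_i) <-> genl s x.
Proof.
elim: s x => [|t s IH] x /=.
  by split; [move=> [r ->]; rewrite big_ord0 | move=> ->; exists (fun _ => 0); rewrite big_ord0].
split.
- move=> [r ->]; rewrite big_ord_recl /=.
  exists (r ord0), (\sum_(i < size s) r (lift ord0 i) * s`_i); split; last by rewrite mulrC.
  by apply/IH; exists (fun i => r (lift ord0 i)).
- move=> [r [y [/IH [r' Hy] ->]]].
  exists (fun i : 'I_(size s).+1 => if unlift ord0 i is Some j then r' j else r).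
  rewrite big_ord_recl /= unlift_none mulrC; congr (_ + _); rewrite Hy; apply: eq_bigr => i _.
  by rewrite liftK.
Qed.

Lemma noeth_gen J : noetherian R -> is_ideal J -> exists s, forall x, J x <-> genl s x.
Proof.
move=> HN HJ; have [s Hs] := HN J HJ; exists s => x.
by rewrite Hs genl_sum.
Qed.

Inductive imul (A B : R -> Prop) : R -> Prop :=
| im0 : imul A B 0
| imM a b : A a -> B b -> imul A B (a * b)
| imD x y : imul A B x -> imul A B y -> imul A B (x + y).

Lemma imul_sub A B (P : R -> Prop) x : is_ideal P ->
  (forall a b, A a -> B b -> P (a * b)) -> imul A B x -> P x.
Proof.
move=> HP H; elim=> [|a b Ha Hb|y z _ Hy _ Hz]; first exact: ideal0.
- exact: H.
- exact: idealD.
Qed.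

Lemma ipow_split t s n x : ipow (genl (t :: s)) n x ->
  forall a b, n = (a + b)%N -> exists y z, ipow (genl s) a y /\ x = y + t ^+ b * z.
Proof.
have HI := genl_ideal (t :: s); have HI' := genl_ideal s.
elim=> {n x} [x|n i j Hi Hj IH|n x y _ IHx _ IHy] a b E.
- case: a E => [|a] // E.
  by exists x, 0; split; [exact: ipow0 | rewrite mulr0 addr0].
- case: a E => [|a] E.
    by exists (i * j), 0; split; [exact: ipow0 | rewrite mulr0 addr0].
  case: b E => [|b] E.
    by exists 0, (i * j); split; [exact: ipow_0 | rewrite expr0 mul1r add0r].
  have [y1 [z1 [Hy1 E1]]] := IH a b.+1 ltac:(by move: E; rewrite addSn => [[]]).
  have [y2 [z2 [Hy2 E2]]] := IH a.+1 b ltac:(by move: E; rewrite addSn addnS => [[]]).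
  move: Hi => /= [r [i' [Hi' ->]]].
  exists (i' * y1 + t * r * y2), (i' * z1 + r * z2); split.
    apply: ipow_D; first exact: ipowS.
    by apply: ipow_M.
  rewrite mulrDl {2}E1 {1}E2 exprS; ring.
- have [y1 [z1 [H1 ->]]] := IHx a b E.
  have [y2 [z2 [H2 ->]]] := IHy a b E.
  exists (y1 + y2), (z1 + z2); split; first exact: ipow_D.
  by ring.
Qed.
Lemma pow_in_ideal s J : is_ideal J -> (forall t, t \in s -> exists k, J (t ^+ k)) ->
  exists M, forall x, ipow (genl s) M x -> J x.
Proof.
move=> HJ; elim: s => [|t s IH] Hs.
  by exists 1%N => x /(ipow_1 (genl_ideal [::])) /= ->; exact: ideal0.
have [M' HM'] := IH (fun t' Ht' => Hs t' ltac:(by rewrite inE Ht' orbT)).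
have [k Hk] := Hs t ltac:(by rewrite inE eqxx).
exists (M' + k)%N => x Hx.
have [y [z [Hy ->]]] := ipow_split Hx (erefl _).
by apply: idealD => //; [exact: HM' | exact: idealMr].
Qed.

Lemma stab N t : noetherian R -> is_ideal N ->
  exists c, forall j x, N (t ^+ j * x) -> N (t ^+ c * x).
Proof.
move=> HNo HN.
have up : forall j d x, N (t ^+ j * x) -> N (t ^+ (d + j) * x).
  by move=> j d x H; rewrite exprD -mulrA; apply: idealMl.
pose U x := exists j, N (t ^+ j * x).
have HU : is_ideal U.
  split.
  - by exists 0%N; rewrite mulr0; exact: ideal0.
  - move=> x y [j1 H1] [j2 H2]; exists (j1 + j2)%N; rewrite mulrDr.
    apply: idealD => //; first by rewrite addnC; apply: up.
    by apply: up.
  - by move=> r x [j H]; exists j; rewrite mulrCA; apply: idealMl.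
have [s Hs] := noeth_gen HNo HU.
have : forall l : seq R, (forall y, y \in l -> U y) -> exists c, forall y, y \in l -> N (t ^+ c * y).
  elim=> [|y l IH] Hl; first by exists 0%N.
  have [c Hc] := IH (fun y' H => Hl y' ltac:(by rewrite inE H orbT)).
  have [j Hj] := Hl y ltac:(by rewrite inE eqxx).
  exists (c + j)%N => y'; rewrite inE => /orP [/eqP ->|H]; first exact: up.
  by rewrite addnC; apply: up; apply: Hc.
move=> /(_ s (fun y H => proj2 (Hs y) (genl_mem H))) [c Hc].
exists c => j x Hx.
have HK : is_ideal (fun x => N (t ^+ c * x)).
  split; first by rewrite mulr0; exact: ideal0.
  - by move=> a b Ha Hb; rewrite mulrDr; apply: idealD.
  - by move=> r a Ha; rewrite mulrCA; apply: idealMl.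
by apply: (genl_sub HK Hc); apply/Hs; exists j.
Qed.
Lemma prime_avoid J t : noetherian R -> is_ideal J -> (forall k, ~ J (t ^+ k)) ->
  exists p, is_prime p /\ subideal J p /\ ~ p t.
Proof.
move=> HNo HJ HJt.
pose F (Q : R -> Prop) := [/\ is_ideal Q, subideal J Q & forall k, ~ Q (t ^+ k)].
have FJ : F J by split => // x.
have [P [FP Pmax]] : exists P, F P /\ forall Q, F Q -> subideal P Q -> subideal Q P.
  apply: NNPP => Hn.
  have H : forall P, F P -> exists Q, F Q /\ subideal P Q /\ ~ subideal Q P.
    move=> P FP; apply: NNPP => Hq; apply: Hn; exists P; split => // Q FQ PQ.
    by apply: NNPP => nQP; apply: Hq; exists Q.
  pose T := {P : R -> Prop | F P}.
  have H' : forall X : T, {Y : T | subideal (sval X) (sval Y) /\ ~ subideal (sval Y) (sval X)}.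
    move=> [P FP0]; apply: constructive_indefinite_description.
    have [Q [FQ [PQ nQP]]] := H P FP0.
    by exists (exist _ Q FQ).
  pose f X := sval (H' X).
  pose C n := iter n f (exist _ J FJ).
  have Cmono : forall n d x, sval (C n) x -> sval (C (d + n)%N) x.
    move=> n d x Hx; elim: d => [//|d IH].
    by rewrite addSn /C iterS; apply: (proj1 (svalP (H' _))).
  have Cid : forall n, is_ideal (sval (C n)) by move=> n; case: (svalP (C n)).
  pose U x := exists n, sval (C n) x.
  have HU : is_ideal U.
    split.
    - by exists 0%N; exact: ideal0.
    - move=> x y [n1 H1] [n2 H2]; exists (n2 + n1)%N; apply: idealD => //.
        exact: Cmono.
      by rewrite addnC; exact: Cmono.
    - by move=> r x [n Hn']; exists n; apply: idealMl.
  have [s Hs] := noeth_gen HNo HU.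
  have : forall l : seq R, (forall y, y \in l -> U y) -> exists c, forall y, y \in l -> sval (C c) y.
    elim=> [|y l IH] Hl; first by exists 0%N.
    have [c Hc] := IH (fun y' H0 => Hl y' ltac:(by rewrite inE H0 orbT)).
    have [j Hj] := Hl y ltac:(by rewrite inE eqxx).
    exists (c + j)%N => y'; rewrite inE => /orP [/eqP ->|H0]; first exact: Cmono.
    by rewrite addnC; apply: Cmono; apply: Hc.
  move=> /(_ s (fun y H0 => proj2 (Hs y) (genl_mem H0))) [c Hc].
  apply: (proj2 (svalP (H' (C c)))) => x Hx.
  apply: (genl_sub (Cid c) Hc); apply/Hs.
  by exists c.+1.
case: FP => HP JP Pt.
exists P; split; last by split => //; move: (Pt 1%N); rewrite expr1.
split => //; first by move: (Pt 0%N); rewrite expr0.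
move=> x y Hxy; apply: NNPP => /not_or_and [nx ny].
have ext : forall z, ~ P z -> exists k a r, P a /\ t ^+ k = a + z * r.
  move=> z nz; apply: NNPP => Hk.
  pose Q w := exists a r, P a /\ w = a + z * r.
  have FQ : F Q.
    split.
    - split.
      + by exists 0, 0; split; [exact: ideal0 | rewrite mulr0 addr0].
      + move=> w1 w2 [a1 [r1 [H1 ->]]] [a2 [r2 [H2 ->]]].
        exists (a1 + a2), (r1 + r2); split; first exact: idealD.
        by ring.
      + move=> r w [a1 [r1 [H1 ->]]]; exists (r * a1), (r * r1); split; first exact: idealMl.
        by ring.
    - by move=> w Jw; exists w, 0; split; [exact: JP | rewrite mulr0 addr0].
    - by move=> k [a [r [Ha E]]]; apply: Hk; exists k, a, r.
  apply: nz; apply: (Pmax Q FQ).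
    by move=> w Pw; exists w, 0; rewrite mulr0 addr0.
  by exists 0, 1; split; [exact: ideal0 | rewrite mulr1 add0r].
have [k1 [a1 [r1 [H1 E1]]]] := ext x nx.
have [k2 [a2 [r2 [H2 E2]]]] := ext y ny.
apply: (Pt (k1 + k2)%N); rewrite exprD E1 E2.
have -> : (a1 + x * r1) * (a2 + y * r2) = a1 * (a2 + y * r2) + (a2 * (x * r1) + (x * y) * (r1 * r2)).
  by ring.
apply: idealD => //; first exact: idealMr.
by apply: idealD => //; [exact: idealMr | exact: idealMr].
Qed.
Lemma imul_monoA A A' B x : (forall y, A y -> A' y) -> imul A B x -> imul A' B x.
Proof.
move=> HA; elim=> [|a b Ha Hb|y z _ Hy _ Hz]; [exact: im0 | apply: imM => //; exact: HA | exact: imD].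
Qed.

Lemma genl_cons t s y : genl s y -> genl (t :: s) y.
Proof. by move=> H; exists 0, y; rewrite mulr0 add0r. Qed.

Lemma WAR ts L N : noetherian R -> is_ideal L -> is_ideal N -> forall m, exists n,
  forall y, N y -> (exists p l, ipow (genl ts) n p /\ L l /\ y = p + l) ->
  exists q l, imul (ipow (genl ts) m) N q /\ L l /\ y = q + l.
Proof.
move=> HNo; elim: ts L => [|t ts IH] L HL HN m.
  exists 1%N => y Ny [p [l [Hp [Hl ->]]]].
  move: Hp => /(ipow_1 (genl_ideal [::])) /= ->.
  by exists 0, l; split; [exact: im0 | rewrite add0r].
pose N' x := exists nu la, N nu /\ L la /\ x = nu + la.
have HN' : is_ideal N'.
  split.
  - by exists 0, 0; split; [exact: ideal0|split; [exact: ideal0|rewrite addr0]].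
  - move=> x y [n1 [l1 [H1 [H1' ->]]]] [n2 [l2 [H2 [H2' ->]]]].
    exists (n1 + n2), (l1 + l2); split; first exact: idealD.
    by split; [exact: idealD | ring].
  - move=> r x [n1 [l1 [H1 [H1' ->]]]]; exists (r * n1), (r * l1).
    by split; [exact: idealMl | split; [exact: idealMl | ring]].
have [c Hc] := stab t HNo HN'.
pose n1 := (m + c)%N.
pose L1 x := exists la z, L la /\ x = la + t ^+ n1 * z.
have HL1 : is_ideal L1.
  split.
  - by exists 0, 0; split; [exact: ideal0 | rewrite mulr0 addr0].
  - move=> x y [l1 [z1 [H1 ->]]] [l2 [z2 [H2 ->]]].
    by exists (l1 + l2), (z1 + z2); split; [exact: idealD | ring].
  - move=> r x [l1 [z1 [H1 ->]]]; exists (r * l1), (r * z1).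
    by split; [exact: idealMl | ring].
have [n2 Hn2] := IH L1 HL1 HN m.
exists (n2 + n1)%N => y Ny [p [l [Hp [Hl Ey]]]].
have [p' [z [Hp' Ep]]] := ipow_split Hp (erefl _).
have Hy : exists p l, ipow (genl ts) n2 p /\ L1 l /\ y = p + l.
  exists p', (l + t ^+ n1 * z); split => //; split; first by exists l, z; split.
  rewrite Ey Ep; ring.
have [q [l1 [Hq [[la [x [Hla El1]]] Ey']]]] := Hn2 y Ny Hy.
have Nq : N q.
  by apply: (imul_sub HN _ Hq) => a b _ Hb; apply: idealMl.
have : N' (t ^+ n1 * x).
  exists (y - q), (- la); split; first exact: idealB.
  by split; [exact: idealN | rewrite Ey' El1; ring].
move=> /(Hc n1 x) [nu [la' [Hnu [Hla' E]]]].
exists (q + t ^+ m * nu), (la + t ^+ m * la'); split.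
  apply: imD.
    apply: imul_monoA Hq => w; apply: ipow_mono => v; exact: genl_cons.
  apply: imM => //; apply: ipow_exp; first exact: genl_ideal.
  exact: genl_mem (mem_head t ts).
split; first by apply: idealD => //; apply: idealMl.
rewrite Ey' El1 /n1 exprD -mulrA E; ring.
Qed.
Lemma F1 ts s : noetherian R -> nzd s -> forall m, exists n,
  forall r, ipow (genl ts) n (r * s) -> ipow (genl ts) m r.
Proof.
move=> HNo Hs m.
have HL : is_ideal (fun x : R => x = 0).
  by split => //; [move=> x y -> ->; rewrite addr0 | move=> r x ->; rewrite mulr0].
have HN : is_ideal (fun x => exists z, x = s * z).
  split; first by exists 0; rewrite mulr0.
  - by move=> x y [z1 ->] [z2 ->]; exists (z1 + z2); rewrite mulrDr.
  - by move=> r x [z ->]; exists (r * z); rewrite mulrCA.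
have [n Hn] := WAR ts HNo HL HN m.
exists n => r Hr.
have [q [l [Hq [-> E]]]] := Hn (r * s) (ex_intro _ r (mulrC _ _))
  (ex_intro _ (r * s) (ex_intro _ 0 (conj Hr (conj (erefl _) (esym (addr0 _)))))).
have HP : is_ideal (fun q => exists e, ipow (genl ts) m e /\ q = s * e).
  have HI := ipow_ideal m (genl_ideal ts).
  split; first by exists 0; split; [exact: ideal0 | rewrite mulr0].
  - by move=> x y [e1 [H1 ->]] [e2 [H2 ->]]; exists (e1 + e2); split; [exact: idealD|rewrite mulrDr].
  - by move=> r' x [e [H ->]]; exists (r' * e); split; [exact: idealMl|rewrite mulrCA].
have [e [He Eq]] : exists e, ipow (genl ts) m e /\ q = s * e.
  apply: (imul_sub HP _ Hq) => a b Ha [z ->].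
  exists (a * z); split; first by rewrite mulrC; apply: ipow_M => //; exact: genl_ideal.
  by rewrite mulrCA.
have : r = e.
  apply/eqP; rewrite -subr_eq0; apply/eqP; apply: Hs.
  by rewrite mulrBr mulrC E addr0 Eq subrr.
by move=> ->.
Qed.

Lemma F2 ts s b M : noetherian R ->
  (forall x, ipow (genl ts) M x -> exists c, x * b = c * s) ->
  (forall n, exists p z, ipow (genl ts) n p /\ b = p + s * z) ->
  exists c, b = s * c.
Proof.
move=> HNo Hcond Hb.
have HL : is_ideal (fun x => exists z, x = s * z).
  split; first by exists 0; rewrite mulr0.
  - by move=> x y [z1 ->] [z2 ->]; exists (z1 + z2); rewrite mulrDr.
  - by move=> r x [z ->]; exists (r * z); rewrite mulrCA.
have HN : is_ideal (fun x => exists u v, x = s * u + b * v).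
  split; first by exists 0, 0; rewrite !mulr0 addr0.
  - by move=> x y [u1 [v1 ->]] [u2 [v2 ->]]; exists (u1 + u2), (v1 + v2); ring.
  - by move=> r x [u [v ->]]; exists (r * u), (r * v); ring.
have [n Hn] := WAR ts HNo HL HN M.
have [p [z [Hp Ebz]]] := Hb n.
have Nb : exists u v, b = s * u + b * v by exists 0, 1; rewrite mulr0 mulr1 add0r.
have Hb' : exists p l, ipow (genl ts) n p /\ (exists z, l = s * z) /\ b = p + l.
  by exists p, (s * z); split => //; split => //; exists z.
have [q [l [Hq [[z' El] E]]]] := Hn b Nb Hb'.
have [z'' Eq] : exists z, q = s * z.
  apply: (imul_sub HL _ Hq) => a x Ha [u [v ->]].
  have [c Hc] := Hcond (a * v) ltac:(by rewrite mulrC; apply: ipow_M => //; exact: genl_ideal).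
  exists (a * u + c).
  have -> : a * (s * u + b * v) = s * (a * u) + a * v * b by ring.
  by rewrite Hc; ring.
by exists (z'' + z'); rewrite E Eq El mulrDr.
Qed.
Lemma Aelt_tele I a : is_ideal I -> Aelt I a -> forall m d, ipow I m (a (d + m)%N - a m).
Proof.
move=> HI Ha m; elim=> [|d IH]; first by rewrite add0n subrr; exact: ipow_0.
have -> : a (d.+1 + m)%N - a m = (a (d + m).+1 - a (d + m)%N) + (a (d + m)%N - a m) by rewrite addSn; ring.
apply: ipow_D => //; apply: (ipow_le HI _ (Ha _)); exact: leq_addl.
Qed.

Lemma Aelt_const I c : is_ideal I -> Aelt I (Aconst c).
Proof. by move=> HI n; rewrite /Aconst subrr; exact: ipow_0. Qed.

Lemma Aelt_add I a b : is_ideal I -> Aelt I a -> Aelt I b -> Aelt I (Aadd a b).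
Proof.
move=> HI Ha Hb n; rewrite /Aadd.
have -> : a n.+1 + b n.+1 - (a n + b n) = (a n.+1 - a n) + (b n.+1 - b n) by ring.
exact: ipow_D.
Qed.

Lemma Aelt_opp I a : is_ideal I -> Aelt I a -> Aelt I (Aopp a).
Proof.
move=> HI Ha n; rewrite /Aopp.
have -> : - a n.+1 - - a n = - (a n.+1 - a n) by ring.
exact: ipow_N.
Qed.

Lemma Aelt_mul I a b : is_ideal I -> Aelt I a -> Aelt I b -> Aelt I (Amul a b).
Proof.
move=> HI Ha Hb n; rewrite /Amul.
have -> : a n.+1 * b n.+1 - a n * b n = a n.+1 * (b n.+1 - b n) + b n * (a n.+1 - a n) by ring.
by apply: ipow_D; apply: ipow_M.
Qed.
End Basics.

Theorem mainTheorem19 (A0 : comNzRingType) (I0 : A0 -> Prop) :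
  noetherian A0 -> reduced A0 -> is_ideal I0 ->
  (* Z = V(I0) contains no generic point of Spec A0 *)
  (forall P, is_minimal_prime P -> ~ subideal I0 P) ->
  (* Z meets every irreducible component V(P) of Spec A0 *)
  (forall P, is_minimal_prime P ->
     exists Q, is_prime Q /\ subideal P Q /\ subideal I0 Q) ->
  forall (a u : nat -> A0), Aelt I0 a -> Anzd I0 u ->
    (exists c : A0, KAeq I0 (a, u) (Aconst c, Aconst 1))
    <->
    ((exists a' : nat -> A0, Aelt I0 a' /\ KAeq I0 (a, u) (a', Aconst 1)) /\
     (exists b s : A0, H0_sections I0 b s /\ KAeq I0 (a, u) (KA_of_KR b s))).
Proof.
move=> HNo _ HI _ _ a u Ha Hu.
have nzd1 : nzd (1 : A0) by move=> x; rewrite mul1r.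
split.
  move=> [c Hc]; split.
    by exists (Aconst c); split => //; exact: Aelt_const.
  exists c, 1; split => //; split => // p [_ Hp1 _] _.
  exists 1, c; split => //; exists 1; split => //=; ring.
move=> [[a' [Ha' [w1 [Hw1 E1]]]] [b [s [[Hs Hsec] [w2 [Hw2 E2]]]]]].
have [ts Hts] := noeth_gen HNo HI.
have toG : forall n x, ipow I0 n x -> ipow (genl ts) n x.
  by move=> n x; apply: ipow_mono => y /Hts.
have ofG : forall n x, ipow (genl ts) n x -> ipow I0 n x.
  by move=> n x; apply: ipow_mono => y /Hts.
have D1 : forall n, ipow I0 n (a n - a' n * u n - 0).
  apply: (proj2 Hw1 (Aadd a (Aopp (Amul a' u)))).
    apply: Aelt_add => //; apply: Aelt_opp => //; apply: Aelt_mul => //; exact: (proj1 Hu).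
  move=> n; have := E1 n; rewrite /Amul /Aadd /Aopp /Aconst /= mulr1.
  by [].
have D2 : forall n, ipow I0 n (a n * s - b * u n - 0).
  apply: (proj2 Hw2 (Aadd (Amul a (Aconst s)) (Aopp (Amul (Aconst b) u)))).
    apply: Aelt_add => //; [apply: Aelt_mul => //; exact: Aelt_const|].
    apply: Aelt_opp => //; apply: Aelt_mul => //; [exact: Aelt_const | exact: (proj1 Hu)].
  by move=> n; have := E2 n; rewrite /Amul /Aadd /Aopp /Aconst /=.
have D3 : forall n, ipow I0 n (a' n * s - b - 0).
  apply: (proj2 Hu (Aadd (Amul a' (Aconst s)) (Aopp (Aconst b)))).
    apply: Aelt_add => //; [apply: Aelt_mul => //; exact: Aelt_const|].
    by apply: Aelt_opp => //; exact: Aelt_const.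
  move=> n; rewrite /Amul /Aadd /Aopp /Aconst /=.
  have -> : u n * (a' n * s + - b) - 0 = - (s * (a n - a' n * u n - 0)) + (a n * s - b * u n - 0) by ring.
  by apply: ipow_D; [apply: ipow_N => //; apply: ipow_M | ].
pose J x := exists c, x * b = c * s.
have HJ : is_ideal J.
  split; first by exists 0; rewrite !mul0r.
  - by move=> x y [c1 H1] [c2 H2]; exists (c1 + c2); rewrite mulrDl H1 H2 mulrDl.
  - by move=> r x [c H]; exists (r * c); rewrite -mulrA H mulrA.
have Hgen : forall t, t \in ts -> exists k, J (t ^+ k).
  move=> t Ht; apply: NNPP => Hn.
  have Hk : forall k, ~ J (t ^+ k) by move=> k Hk; apply: Hn; exists k.
  have [p [Hp [Jp pt]]] := prime_avoid HNo HJ Hk.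
  have [g [c [pg [v [Hv Ev]]]]] := Hsec p Hp (fun H => pt (H t (proj2 (Hts t) (genl_mem Ht)))).
  apply: pg; apply: Jp; exists c.
  have := Hv _ Ev; rewrite /= mulr1 => /eqP; rewrite subr_eq0 => /eqP.
  by [].
have [M HM] := pow_in_ideal HJ Hgen.
have [c Hc] : exists c, b = s * c.
  apply: (F2 (ts := ts) (M := M) HNo); first exact: HM.
  move=> n.
  exists (- (a' n * s - b)), (a' n); split.
    by apply: toG; apply: ipow_N => //; move: (D3 n); rewrite subr0.
  by ring.
have D4 : forall m, ipow I0 m (a' m - c).
  move=> m; have [n Hn] := F1 ts HNo Hs m.
  have H1 : ipow I0 m (a' (n + m)%N - c).
    apply: ofG; apply: Hn; apply: toG.
    apply: (ipow_le HI (leq_addr m n)).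
    by move: (D3 (n + m)%N); rewrite subr0 Hc mulrBl [c * s]mulrC.
  have -> : a' m - c = (a' (n + m)%N - c) - (a' (n + m)%N - a' m) by ring.
  by apply: ipow_B => //; exact: Aelt_tele.
exists c, w1; split => // n.
move: (E1 n); rewrite /Amul /Aadd /Aopp /Aconst /= => H.
have -> : w1 n * (a n * 1 + - (c * u n)) - 0 =
  (w1 n * (a n * 1 + - (a' n * u n)) - 0) + w1 n * u n * (a' n - c) by ring.
by apply: ipow_D => //; apply: ipow_M.
Qed.
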